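(* Let $s\ge1$, let $E_1,\ldots,E_s,F_1,\ldots,F_s$ be real numbers, and let $Z_j=\{F_j,\,E_j+F_j+1\}$ for $j=1,\ldots,s$. Suppose that for every $r=1,2,\ldots,s$, $$E_r+F_r+1+\max\big(Z_{r+1}+Z_{r+2}+\cdots+Z_s\big)<0.$$ Then the multiple series $$\sum_{k_1,\ldots,k_s\ge0}\ \prod_{j=1}^{s}(k_j+1)^{E_j}\,(k_1+\cdots+k_j+1)^{F_j}$$ converges.
   Context: For sets $S,T$ of reals, $S+T=\{x+y: x\in S,\ y\in T\}$ is the sum-set; for $r=s$ the sum-set $Z_{r+1}+\cdots+Z_s$ is empty of summands and is interpreted as $\{0\}$, so the condition reads $E_s+F_s+1<0$. *)

(* Defs.v *)
From HB Require Import structures.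
From mathcomp Require Import all_boot all_order all_algebra.
From mathcomp Require Import all_classical all_reals all_analysis.
Set Implicit Arguments. Unset Strict Implicit. Unset Printing Implicit Defensive.
Import Order.TTheory GRing.Theory Num.Theory.
Local Open Scope ring_scope.

Section Defs.
Variables (R : realType) (s : nat).

Definition Zset (E F : 'I_s -> R) (j : 'I_s) : seq R := [:: F j; E j + F j + 1].

Definition sumset (S T : seq R) : seq R := [seq x + y | x <- S, y <- T].

(* Z_{r+1} + ... + Z_s  (0-based: all j with r < j); the empty sum is {0} *)
Definition Zsum (E F : 'I_s -> R) (r : 'I_s) : seq R :=
  foldr sumset [:: 0] [seq Zset E F j | j : 'I_s <- enum 'I_s & (r < j)%N].

Definition seqmax (S : seq R) : R := foldr Num.max (head 0 S) S.

Definition term (E F : 'I_s -> R) (k : {ffun 'I_s -> nat}) : R :=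
  \prod_(j < s) (((k j).+1%:R) `^ (E j) *
                 ((\sum_(i < s | (i <= j)%N) k i).+1%:R) `^ (F j)).

End Defs.

(* Main.v *)
Require Import Defs.
From HB Require Import structures.
From mathcomp Require Import all_boot all_order all_algebra.
From mathcomp Require Import all_classical all_reals all_analysis.
From mathcomp Require Import ring lra zify.
Import Order.TTheory GRing.Theory Num.Theory.
Local Open Scope ring_scope.

Section H.
Variable R : realType.
Implicit Types x y a c d E G eps : R.

Lemma eqW' x y : x = y -> x <= y. Proof. by move=> ->. Qed.

Lemma powR_anti x y c : 0 < x -> x <= y -> c <= 0 -> y `^ c <= x `^ c.
Proof.
move=> x0 xy c0; have y0 : 0 < y by apply: lt_le_trans xy.
rewrite /powR !gt_eqF // ler_expR ler_wnM2l //.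
by rewrite ler_ln ?posrE.
Qed.

Lemma PL E G eps : E + G + 1 < 0 -> 0 < eps -> exists c d,
  [/\ c <= Num.max G (E + G + 1) + eps, E + d < -1 &
  forall x y, 1 <= x -> 1 <= y -> (x + y - 1) `^ G <= x `^ c * y `^ d].
Proof.
move=> h e0.
have hG : G <= Num.max G (E + G + 1) by rewrite le_max lexx.
have hEG : E + G + 1 <= Num.max G (E + G + 1) by rewrite le_max lexx orbT.
case: (lerP 0 G) => G0.
  exists G, G; split; [lra|lra|] => x y x1 y1.
  rewrite -powRM; try lra.
  have G0' : 0 <= G by lra.
  apply: (ge0_ler_powR G0'); rewrite ?nnegrE; nra.
pose m := Num.min (- eps) (- E - 1 - eps).
have m1 : m <= - eps by rewrite ge_min lexx.
have m2 : m <= - E - 1 - eps by rewrite ge_min lexx orbT.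
have m3 : m = - eps \/ m = - E - 1 - eps.
  rewrite /m; case: (lerP (- eps) (- E - 1 - eps)) => hh.
    by left.
  by right.
pose d := Num.max G m.
have d1 : G <= d by rewrite le_max lexx.
have d2 : m <= d by rewrite le_max lexx orbT.
have d3 : d = G \/ d = m.
  rewrite /d; case: (lerP G m) => hh.
    by right.
  by left.
clearbody d m.
exists (G - d), d; split.
- case: m3 => hm; lra.
- case: d3 => hd; lra.
move=> x y x1 y1.
have -> : (x + y - 1) `^ G = (x + y - 1) `^ (G - d) * (x + y - 1) `^ d.
  rewrite -powRD; first by congr (_ `^ _); ring.
  by apply/implyP => _; apply/eqP; lra.
apply: ler_pM; rewrite ?powR_ge0 //; apply: powR_anti; try lra.
Qed.

Lemma dyadic a m : a < -1 ->
  \sum_(1 <= n < 2 ^ m) n%:R `^ a <= \sum_(i < m) (2 `^ (1 + a)) ^+ i.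
Proof.
move=> ha; elim: m => [|m IH]; first by rewrite big_geq // big_ord0.
rewrite big_ord_recr /= (big_cat_nat _ (n := 2 ^ m)) //=; last first.
  by rewrite leq_exp2l.
  by rewrite expn_gt0.
apply: lerD => //.
apply: (@le_trans _ _ (\sum_(2 ^ m <= i < 2 ^ m.+1) (2 ^ m)%:R `^ a)).
  apply: ler_sum_nat => i /andP [h1 h2]; apply: powR_anti; try lra.
    by rewrite ltr0n expn_gt0.
  by rewrite ler_nat.
rewrite sumr_const_nat.
have -> : (2 ^ m.+1 - 2 ^ m = 2 ^ m)%N by rewrite expnS; lia.
rewrite -(mulr_natr ((2 ^ m)%:R `^ a)).
have e1 : ((2 ^ m)%:R : R) = 2 `^ m%:R by rewrite natrX powR_mulrn ?ler0n.
rewrite e1.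
rewrite -powRrM -powRD; last by apply/implyP => _; rewrite pnatr_eq0.
rewrite -(@powR_mulrn _ (2 `^ (1 + a))) ?powR_ge0 // -powRrM.
apply: eqW'; congr (_ `^ _); ring.
Qed.

Lemma sum_bound a : a < -1 -> exists C, forall N,
  \sum_(n < N) n.+1%:R `^ a <= C.
Proof.
move=> ha; set q := 2 `^ (1 + a).
have q0 : 0 < q by rewrite powR_gt0.
have q1 : q < 1.
  have hh : q <= 1.
    have h2 : (1 : R) <= 2 by lra.
    have := @ler_powR R 2 h2 (1 + a) 0; rewrite powRr0; apply; lra.
  rewrite /q; have hh2 : 2 `^ (1 + a) != 1.
    by rewrite powR_eq1; apply/negP => /or3P [/eqP h'|h'|/eqP h']; lra.
  by rewrite lt_neqAle hh2 hh.
exists (1 / (1 - q)) => N.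
apply: (@le_trans _ _ (\sum_(1 <= n < 2 ^ N.+1) n%:R `^ a)).
  have -> : \sum_(n < N) n.+1%:R `^ a = \sum_(1 <= n < N.+1) n%:R `^ a.
    by rewrite big_add1 /= big_mkord.
  rewrite (big_cat_nat _ (n := N.+1) (m := 1) (p := 2 ^ N.+1)) //=; last first.
    by apply: ltnW; rewrite ltn_expl.
  rewrite -[X in X <= _]addr0; apply: lerD => //.
  by apply: sumr_ge0 => i _; rewrite powR_ge0.
apply: (le_trans (dyadic a N.+1 ha)).
have := geometric_le_lim N.+1 ler01 q0; rewrite ger0_norm ?(ltW q0) // => /(_ q1).
apply: le_trans; rewrite le_eqVlt; apply/orP; left; apply/eqP; rewrite /series /=.
by rewrite big_mkord; apply: eq_bigr => i _; rewrite mul1r.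
Qed.

End H.

Section Main.
Variables (R : realType) (s : nat) (E F : 'I_s -> R).

Definition Kp (k : {ffun 'I_s -> nat}) (r : nat) : nat := \sum_(i < s | (i < r)%N) k i.
Definition Mj j := Num.max (F j) (E j + F j + 1).
Definition Pr (r : nat) (k : {ffun 'I_s -> nat}) : R :=
  \prod_(j < s | (r <= j)%N) ((k j).+1%:R `^ E j * (Kp k j.+1).+1%:R `^ F j).

Lemma foldr_max_ge (S : seq R) d x : x \in S -> x <= foldr Num.max d S.
Proof.
elim: S => [//|y S IH]; rewrite inE => /orP [/eqP ->|hx] /=.
  by rewrite le_max lexx.
by rewrite le_max (IH hx) orbT.
Qed.

Lemma sum_in_Zsum (L : seq 'I_s) :
  \sum_(j <- L) Mj j \in foldr (@sumset R) [:: 0] [seq Zset E F j | j <- L].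
Proof.
elim: L => [|j L IH]; first by rewrite big_nil inE.
rewrite big_cons /=; apply: allpairs_f => //.
rewrite /Mj /Zset !inE; case: (lerP (F j) (E j + F j + 1)) => _.
  by rewrite eqxx orbT.
by rewrite eqxx.
Qed.

Lemma Zsum_ge (r : 'I_s) : \sum_(j < s | (r < j)%N) Mj j <= seqmax (Zsum E F r).
Proof.
apply: foldr_max_ge.
have := sum_in_Zsum (seq.filter (fun j : 'I_s => (r < j)%N) (enum 'I_s)).
rewrite big_filter big_enum_cond /=.
by [].
Qed.

Lemma big_split_r (T : Type) (idx : T) (op : Monoid.com_law idx) r (hr : (r < s)%N)
  (f : 'I_s -> T) :
  \big[op/idx]_(j < s | (r <= j)%N) f j =
  op (f (Ordinal hr)) (\big[op/idx]_(j < s | (r < j)%N) f j).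
Proof.
rewrite (bigD1 (Ordinal hr)) /= ?leqnn //; congr (op _ _); apply: eq_bigl => j.
by rewrite -val_eqE /=; case: (ltngtP r j).
Qed.

Lemma sum_split_r r (hr : (r < s)%N) (f : 'I_s -> R) :
  \sum_(j < s | (r <= j)%N) f j = f (Ordinal hr) + \sum_(j < s | (r < j)%N) f j.
Proof. exact: big_split_r. Qed.

Lemma prod_split_r r (hr : (r < s)%N) (f : 'I_s -> R) :
  \prod_(j < s | (r <= j)%N) f j = f (Ordinal hr) * \prod_(j < s | (r < j)%N) f j.
Proof. exact: big_split_r. Qed.

Lemma Kp_split k r (hr : (r < s)%N) : Kp k r.+1 = (Kp k r + k (Ordinal hr))%N.
Proof.
rewrite /Kp (bigD1 (Ordinal hr)) /= ?ltnSn // addnC; congr (_ + _)%N.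
by apply: eq_bigl => j; rewrite -val_eqE /=; rewrite ltnS; case: (ltngtP r j).
Qed.


Hypothesis hyp' : forall r : 'I_s, E r + F r + 1 + \sum_(j < s | (r < j)%N) Mj j < 0.

Lemma claim m : forall r, (r + m = s)%N -> forall eta : R, 0 < eta -> exists c : R,
  c <= \sum_(j < s | (r <= j)%N) Mj j + eta /\
  exists a : 'I_s -> R, (forall j : 'I_s, (r <= j)%N -> a j < -1) /\
  forall k, Pr r k <= (Kp k r).+1%:R `^ c * \prod_(j < s | (r <= j)%N) (k j).+1%:R `^ a j.
Proof.
elim: m => [|m IH] r hr eta he.
  rewrite addn0 in hr; subst r.
  have h0 : forall j : 'I_s, (s <= j)%N = false by move=> j; rewrite leqNgt ltn_ord.
  exists 0; split; first by rewrite big_pred0 // add0r ltW.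
  exists (fun _ => -2); split; first by move=> j; rewrite h0.
  by move=> k; rewrite /Pr !big_pred0 // powRr0 mulr1.
have hrs : (r < s)%N by rewrite -hr; lia.
have := hyp' (Ordinal hrs); rewrite /= => hy.
set S := \sum_(j < s | (r < j)%N) Mj j in hy.
set rr := Ordinal hrs in hy *.
pose del := - (E rr + F rr + 1 + S).
have del0 : 0 < del by rewrite /del; lra.
pose eta' := Num.min (eta / 2) (del / 2).
have e1 : eta' <= eta / 2 by rewrite ge_min lexx.
have e2 : eta' <= del / 2 by rewrite ge_min lexx orbT.
have e0 : 0 < eta' by rewrite lt_min; apply/andP; split; lra.
have hr1 : (r.+1 + m = s)%N by rewrite -hr; lia.
have [c' [hc' [a' [ha' hb']]]] := IH r.+1 hr1 eta' e0.
rewrite -/S in hc'.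
pose G := F rr + c'.
have hEG : E rr + G + 1 < 0 by rewrite /G; rewrite /del in e2; lra.
have e3 : 0 < eta / 2 by lra.
have [c [d [hc hd hpw]]] := @PL R (E rr) G (eta / 2) hEG e3.
have hM1 : F rr <= Mj rr by rewrite le_max lexx.
have hM2 : E rr + F rr + 1 <= Mj rr by rewrite le_max lexx orbT.
have hmax : Num.max G (E rr + G + 1) <= c' + Mj rr.
  by rewrite ge_max /G; apply/andP; split; lra.
exists c; split.
  rewrite (@sum_split_r _ hrs) -/rr -/S; lra.
exists (fun j => if j == rr then E rr + d else a' j); split.
  move=> j hj; case: eqP => [_|/eqP hne]; first by [].
  apply: ha'; move: hne; rewrite -val_eqE /= => hne.
  by rewrite ltn_neqAle eq_sym hne.
move=> k.
rewrite /Pr (@prod_split_r _ hrs) (@prod_split_r _ hrs (fun j => _ `^ _)) -/rr eqxx.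
have hP : \prod_(j < s | (r < j)%N) (k j).+1%:R `^ (if j == rr then E rr + d else a' j)
    = \prod_(j < s | (r < j)%N) (k j).+1%:R `^ a' j.
  apply: eq_bigr => j hj; case: (j =P rr) => // hje; move: hj; rewrite hje /= ltnn //.
rewrite hP.
have hb := hb' k; rewrite /Pr in hb.
set PP := \prod_(j < s | (r < j)%N) _ in hb *.
set Pi := \prod_(j < s | (r < j)%N) _ in hb *.
set X := (Kp k r).+1%:R.
set Y := (k rr).+1%:R.
set Z := (Kp k rr.+1).+1%:R.
have hZ : Z = X + Y - 1.
  rewrite /Z /X /Y /= (@Kp_split k _ hrs) -/rr.
  by rewrite -addn1 -(addn1 (k rr)) -(addn1 (Kp k r)) !natrD; ring.
have X1 : 1 <= X by rewrite /X ler1n.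
have Y1 : 1 <= Y by rewrite /Y ler1n.
have Z0 : Z != 0 by rewrite /Z pnatr_eq0.
apply: (@le_trans _ _ (Y `^ E rr * Z `^ F rr * (Z `^ c' * Pi))).
  by apply: ler_wpM2l => //; apply: mulr_ge0; apply: powR_ge0.
rewrite mulrA -(mulrA _ (Z `^ F rr)) -powRD; last by apply/implyP.
rewrite -/G.
apply: (@le_trans _ _ (Y `^ E rr * (X `^ c * Y `^ d) * Pi)).
  apply: ler_wpM2r; first by apply: prodr_ge0 => j _; apply: powR_ge0.
  apply: ler_wpM2l; first by apply: powR_ge0.
  by rewrite hZ; apply: hpw.
rewrite powRD; last by apply/implyP => _; rewrite /Y pnatr_eq0.
rewrite le_eqVlt; apply/orP; left; apply/eqP; ring.
Qed.


Lemma term_bound : exists a : 'I_s -> R, (forall j, a j < -1) /\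
  forall k, term E F k <= \prod_(j < s) (k j).+1%:R `^ a j.
Proof.
have [c [_ [a [ha hb]]]] := @claim s 0 (add0n s) 1 ltr01.
exists a; split; first by move=> j; apply: ha.
move=> k; have := hb k.
have -> : Kp k 0 = 0%N by rewrite /Kp big_pred0.
rewrite powR1 mul1r /Pr => h; apply: le_trans h.
rewrite /term le_eqVlt; apply/orP; left; apply/eqP.
by apply: eq_bigr => j _.
Qed.

End Main.

Lemma sub_sum_le (R : realType) (T : finType) (l : seq T) (h : T -> R) :
  uniq l -> (forall x, 0 <= h x) -> \sum_(x <- l) h x <= \sum_x h x.
Proof.
move=> ul h0; rewrite big_uniq // [X in _ <= X](bigID (mem l)) /=.
rewrite -[X in X <= _]addr0; apply: lerD => //.
by apply: sumr_ge0.
Qed.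

Lemma fin_bound (R : realType) (s : nat) (a : 'I_s -> R) (ha : forall j, a j < -1) :
  exists C, forall l : seq {ffun 'I_s -> nat}, uniq l ->
  \sum_(k <- l) \prod_(j < s) (k j).+1%:R `^ a j <= C.
Proof.
have [C hC] := choice (fun j => @sum_bound R (a j) (ha j)).
exists (\prod_(j < s) C j) => l ul.
pose M := (\max_(k <- l) \max_(j < s) k j)%N.
pose phi (k : {ffun 'I_s -> nat}) : {ffun 'I_s -> 'I_M.+1} := [ffun j => inord (k j)].
have hphi : forall k, k \in l -> forall j, nat_of_ord (phi k j) = k j.
  move=> k hk j; rewrite ffunE inordK // ltnS.
  apply: leq_trans (leq_bigmax j) _.
  exact: (@leq_bigmax_seq _ l xpredT (fun k => \max_(j < s) k j)%N k hk).
pose h' (f : {ffun 'I_s -> 'I_M.+1}) := \prod_(j < s) (f j).+1%:R `^ a j.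
have -> : \sum_(k <- l) \prod_(j < s) (k j).+1%:R `^ a j = \sum_(k <- l) h' (phi k).
  apply: eq_big_seq => k hk; apply: eq_bigr => j _; by rewrite hphi.
rewrite -(big_map phi xpredT h').
apply: (@le_trans _ _ (\sum_f h' f)).
  apply: sub_sum_le.
  - rewrite map_inj_in_uniq // => x y hx hy he; apply/ffunP => j.
    by rewrite -(hphi x hx j) -(hphi y hy j) he.
  - by move=> f; apply: prodr_ge0 => j _; apply: powR_ge0.
rewrite /h' -(bigA_distr_bigA (fun j (n : 'I_M.+1) => n.+1%:R `^ a j)) /=.
apply: ler_prod => j _; apply/andP; split.
  by apply: sumr_ge0 => n _; apply: powR_ge0.
exact: hC.
Qed.

Theorem lemma3p4 (R : realType) (s : nat) (hs : (0 < s)%N) (E F : 'I_s -> R)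
  (hyp : forall r : 'I_s, E r + F r + 1 + seqmax (Zsum E F r) < 0) :
  (\esum_(k in [set: {ffun 'I_s -> nat}]) (term E F k)%:E < +oo)%E.
Proof.
have hyp' : forall r : 'I_s, E r + F r + 1 + \sum_(j < s | (r < j)%N) @Mj R s E F j < 0.
  by move=> r; have := hyp r; have := @Zsum_ge R s E F r; lra.
have [a [ha hb]] := @term_bound R s E F hyp'.
have [C hC] := @fin_bound R s a ha.
apply: (@le_lt_trans _ _ C%:E); last by rewrite ltry.
apply: ge_ereal_sup => _ [X [finX _] <-].
rewrite fsbig_finite //= sumEFin lee_fin.
apply: le_trans (hC _ (finmap.fset_uniq _)).
by apply: ler_sum => k _; apply: hb.
Qed.
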